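(* Let $d,p\in\mathbb N$, let $\mathcal X$ be a bounded, nonempty, Borel subset of $\mathbb R^d$ and $P_X$ a Borel probability distribution on $\mathcal X$. For $a\ge0$ let $k_{p,a}(x,y)=(x^\top y+a)^p$. Then there exists $C(p,d,P_X)>0$, depending only on $p$, $d$ and $P_X$, such that for all $a\ge0$ and $\gamma>0$, the quantity $H_\gamma$ associated with $k_{p,a}$ and $P_X$ satisfies $H_\gamma\le C(p,d,P_X)$.
   Context: For a kernel $k$ with a decomposition $k(x,y)=\sum_{r\in\mathcal R}\nu_re_r(x)e_r(y)$ where the $\nu_r>0$ are the (positive) eigenvalues of the integral operator $f\mapsto\int k(x,\cdot)f(x)\,dP_X(x)$ on $L_2(P_X)$ and $(e_r)$ are corresponding $L_2(P_X)$-orthonormal eigenfunctions, define for $\gamma>0$: $a_r=1/(1+\gamma/\nu_r)$ and $H_\gamma=\sup_{x\in\mathcal X}\sum_{r\in\mathcal R}a_re_r(x)^2$ (this does not depend on the choice of orthonormal eigenfunctions). *)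

(* Defs.v *)
From HB Require Import structures.
From mathcomp Require Import all_boot all_order all_algebra.
From mathcomp Require Import all_classical all_reals all_analysis.
Set Implicit Arguments. Unset Strict Implicit. Unset Printing Implicit Defensive.
Import Order.TTheory GRing.Theory Num.Theory.
Import numFieldNormedType.Exports.
Local Open Scope classical_set_scope.
Local Open Scope ring_scope.

Definition Rd (R : realType) (d : nat) :=
  g_sigma_algebraType (@open 'rV[R]_d).

Definition dotp (R : realType) (d : nat) (x y : 'rV[R]_d) : R :=
  \sum_(i < d) x ord0 i * y ord0 i.

Definition kpoly (R : realType) (d p : nat) (a : R) (x y : 'rV[R]_d) : R :=
  (dotp x y + a) ^+ p.

(* (nu_r, e_r)_{r in I} is a decomposition of the kernel k as in the context:
   the nu_r > 0 are eigenvalues of the integral operator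
   f |-> \int k(x,.) f(x) dP(x) on L_2(P) (P concentrated on X),
   the e_r are corresponding L_2(P)-orthonormal eigenfunctions, and
   k(x,y) = \sum_r nu_r e_r(x) e_r(y) on X x X. *)
Definition kernel_decomposition (R : realType) (d : nat) (X : set (Rd R d))
    (P : probability (Rd R d) R) (k : Rd R d -> Rd R d -> R)
    (I : finType) (nu : I -> R) (e : I -> Rd R d -> R) : Prop :=
  (forall r, 0 < nu r) /\
  (forall r, measurable_fun X (e r)) /\
  (forall r, P.-integrable X (fun x => ((e r x) ^+ 2)%:E)) /\
      (forall r s, (\int[P]_(x in X) (e r x * e s x)%:E)%E
                     = ((r == s)%:R)%:E) /\
      (forall r y, X y ->
         (\int[P]_(x in X) (k x y * e r x)%:E)%E = (nu r * e r y)%:E) /\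
      (forall x y, X x -> X y -> k x y = \sum_(r : I) nu r * e r x * e r y).

Definition a_coef (R : realType) (I : Type) (nu : I -> R) (gamma : R) (r : I) : R :=
  1 / (1 + gamma / nu r).

Definition H_gamma (R : realType) (d : nat) (X : set (Rd R d))
    (I : finType) (nu : I -> R) (e : I -> Rd R d -> R) (gamma : R) : \bar R :=
  ereal_sup [set (\sum_(r : I) a_coef nu gamma r * (e r x) ^+ 2)%:E | x in X].

(* Main.v *)
Require Import Defs.
From HB Require Import structures.
From mathcomp Require Import all_boot all_order all_algebra.
From mathcomp Require Import all_classical all_reals all_analysis.
From mathcomp Require Import lra ring.
Import Order.TTheory GRing.Theory Num.Theory.
Import numFieldNormedType.Exports.
Local Open Scope classical_set_scope.
Local Open Scope ring_scope.

Lemma abs_le1sq (R : realDomainType) (t:R) : `|t| <= 1 + t^+2.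
Proof. have [h|h] := ler0P t; rewrite ?ler0_norm ?gtr0_norm //; nra. Qed.
Lemma abs_mul_le (R : realDomainType) (s t: R) : `|s*t| <= s^+2 + t^+2.
Proof. rewrite normrM; have [h|h] := ler0P t; have [h'|h'] := ler0P s; rewrite ?ler0_norm ?gtr0_norm //; nra. Qed.

Section integ.
Context (dT : measure_display) (T : measurableType dT) (R : realType).
Variables (mu : probability T R) (D : set T) (mD : measurable D).

Definition RI (f : T -> R) : R := fine (\int[mu]_(x in D) (f x)%:E)%E.

Lemma int_cst (k : R) : mu.-integrable D (EFin \o cst k).
Proof. exact: finite_measure_integrable_cst. Qed.

Lemma int_sq_int (f : T -> R) : measurable_fun D f ->
  mu.-integrable D (fun x => (f x ^+ 2)%:E) -> mu.-integrable D (EFin \o f).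
Proof.
move=> mf hf.
apply: (@le_integrable _ _ _ mu D mD _ (fun x => (1 + f x ^+ 2)%:E)).
- exact/measurable_realfun.measurable_EFinP.
- move=> x _; rewrite /=.
  rewrite lee_fin [X in _ <= X]ger0_norm; last first.
    by rewrite addr_ge0 // sqr_ge0.
  exact: abs_le1sq.
- rewrite (_ : (fun x => _) = (EFin \o cst 1) \+ (fun x => (f x ^+ 2)%:E)).
    exact: (integrableD mD) (int_cst 1) hf.
  by apply/funext => x /=; rewrite EFinD.
Qed.

Lemma int_bnd_mul (g f : T -> R) (c : R) : measurable_fun D g ->
  (forall x, D x -> `|g x| <= c) ->
  mu.-integrable D (EFin \o f) -> mu.-integrable D (fun x => (g x * f x)%:E).
Proof.
move=> mg gc hf.
have mf : measurable_fun D f by apply/measurable_realfun.measurable_EFinP; exact: measurable_int hf.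
have HI := integrableZl mD c hf.
apply: (le_integrable mD _ _ HI).
- by apply/measurable_realfun.measurable_EFinP; exact: measurable_realfun.measurable_funM.
- move=> x Dx /=.
  by rewrite lee_fin !normrM ler_wpM2r // (le_trans (gc x Dx)) // ler_norm.
Qed.

Lemma int_mul_sq (f g : T -> R) : measurable_fun D f -> measurable_fun D g ->
  mu.-integrable D (fun x => (f x ^+ 2)%:E) -> mu.-integrable D (fun x => (g x ^+ 2)%:E) ->
  mu.-integrable D (fun x => (f x * g x)%:E).
Proof.
move=> mf mg hf hg.
apply: (@le_integrable _ _ _ mu D mD _ (fun x => (f x ^+ 2)%:E + (g x ^+ 2)%:E)%E).
- by apply/measurable_realfun.measurable_EFinP; exact: measurable_realfun.measurable_funM.
- move=> x _; rewrite -EFinD !abse_EFin lee_fin [X in _ <= X]ger0_norm; last first.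
    by rewrite addr_ge0 // sqr_ge0.
  exact: abs_mul_le.
- exact: (integrableD mD).
Qed.

Lemma RI_lin (I : finType) (c : I -> R) (g : I -> T -> R) :
  (forall i, mu.-integrable D (EFin \o g i)) ->
  (\int[mu]_(x in D) (\sum_i c i * g i x)%:E)%E = (\sum_i c i * RI (g i))%:E.
Proof.
move=> hg.
under eq_integral do rewrite -sumEFin.
rewrite integral_sum //; last first.
  by move=> i; apply: (eq_integrable mD _ _ _ (integrableZl mD (c i) (hg i))) => x _; rewrite /= EFinM.
rewrite -sumEFin; apply: eq_bigr => i _.
under eq_integral do rewrite EFinM.
rewrite (integralZl mD (hg i)) EFinM /RI fineK //.
by have := integrable_fin_num mD (hg i).
Qed.

End integ.

Section linalg.
Variables (R : realType) (J : finType).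

Lemma sumJ (F : J -> R) : \sum_t F t = \sum_(i < #|J|) F (enum_val i).
Proof.
rewrite (reindex (@enum_val J predT)) //=.
by exists (@enum_rank J) => x _; [exact: enum_valK | exact: enum_rankK].
Qed.

Definition Gm (G : J -> J -> R) : 'M[R]_#|J| :=
  \matrix_(i, j) G (enum_val i) (enum_val j).
Definition Qf (G : J -> J -> R) t s := pinvmx (Gm G) (enum_rank t) (enum_rank s).

Lemma quad_pinv (G : J -> J -> R) (u v : J -> R) :
  (forall t s, G t s = G s t) ->
  (forall t, u t = \sum_s G t s * v s) ->
  \sum_t u t * v t = \sum_t \sum_s u t * Qf G t s * u s.
Proof.
move=> sym huv.
pose U : 'rV[R]_#|J| := \row_i u (enum_val i).
pose V : 'rV[R]_#|J| := \row_i v (enum_val i).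
pose A := Gm G.
have AT : A^T = A by apply/matrixP => i j; rewrite !mxE sym.
have UVA : U = V *m A.
  apply/matrixP => i j; rewrite !mxE huv sumJ; apply: eq_bigr => k _.
  by rewrite !mxE mulrC sym.
have UA : (U <= A)%MS by rewrite UVA submxMl.
have key : U *m pinvmx A *m U^T = U *m V^T.
  rewrite {2}UVA trmx_mul AT mulmxA -[X in _ = X *m _](mulmxKpV UA) //.
have -> : \sum_t u t * v t = (U *m V^T) 0 0.
  by rewrite !mxE sumJ; apply: eq_bigr => i _; rewrite !mxE.
rewrite -key !mxE sumJ.
under [RHS]eq_bigr => i _ do rewrite sumJ.
rewrite exchange_big; apply: eq_bigr => i _.
rewrite !mxE mulr_suml; apply: eq_bigr => k _.
by rewrite /U /Qf mxE !enum_valK.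
Qed.
End linalg.

Lemma sumopt (R : ringType) (I : finType) (F : option I -> R) :
  \sum_o F o = F None + \sum_i F (Some i).
Proof.
rewrite [LHS](bigD1 None) //=; congr (_ + _).
rewrite (reindex_omap Some (fun o => o)) /=; last by case.
by apply: eq_bigl => i; rewrite eqxx.
Qed.

Section poly.
Variables (R : realType) (d p : nat).
Definition mon (f : {ffun 'I_p -> option 'I_d}) (x : 'rV[R]_d) : R :=
  \prod_(k < p) (if f k is Some i then x ord0 i else 1).
Definition wt (a : R) (f : {ffun 'I_p -> option 'I_d}) : R :=
  \prod_(k < p) (if f k is Some _ then 1 else a).

Lemma kpoly_exp a (x y : 'rV[R]_d) :
  kpoly p a x y = \sum_(f : {ffun 'I_p -> option 'I_d}) wt a f * mon f x * mon f y.
Proof.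
rewrite /kpoly.
have -> : dotp x y + a = \sum_(o : option 'I_d)
    (if o is Some i then x ord0 i * y ord0 i else a).
  by rewrite sumopt addrC /dotp.
rewrite -[in LHS](card_ord p) -prodr_const bigA_distr_bigA; apply: eq_bigr => f _.
rewrite /wt /mon -!big_split /=; apply: eq_bigr => k _.
by case: (f k) => [i|]; rewrite ?mul1r ?mulr1.
Qed.

Lemma wt_ge0 a f : 0 <= a -> 0 <= wt a f.
Proof. by move=> a0; apply: prodr_ge0 => k _; case: (f k). Qed.

Lemma mon_bnd (K : R) f (x : 'rV[R]_d) : 1 <= K -> (forall i, `|x ord0 i| <= K) ->
  `|mon f x| <= K ^+ p.
Proof.
move=> K1 hx; rewrite /mon normr_prod -[in X in _ <= X](card_ord p) -prodr_const.
apply: ler_prod => k _; rewrite normr_ge0 /=.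
by case: (f k) => [i|]; rewrite ?normr1.
Qed.
End poly.

Lemma mcoord (R : realType) d (D : set (Rd R d)) (i : 'I_d) : measurable D ->
  measurable_fun D (fun x : Rd R d => (x : 'rV[R]_d) ord0 i).
Proof.
move=> mD.
apply: (measurability _ (measurable_realfun.RGenOpens.measurableE R)).
move=> _ [_ [a [b ->] <-]].
apply: measurableI => //.
apply: sub_sigma_algebra.
apply: (@open_comp _ _ (fun x : 'rV[R]_d => x ord0 i)).
  by move=> x _; exact: coord_continuous.
exact: interval_open.
Qed.
Lemma coord_le_norm (R : realType) d (x : 'rV[R]_d) i : `|x ord0 i| <= `|x|.
Proof.
rewrite [X in _ <= X]mx_normrE.
exact: (le_bigmax _ _ (ord0, i)).
Qed.

Lemma bnd_coord (R : realType) d (X : set 'rV[R]_d) :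
  [bounded x | x in X] -> exists K : R, 1 <= K /\ forall x, X x -> forall i, `|x ord0 i| <= K.
Proof.
move=> [M [Mr HM]].
exists (`|M| + 1); split; first by rewrite lerDr.
move=> x Xx i.
have Mlt : M < `|M| + 1 by rewrite (le_lt_trans (real_ler_norm Mr)) // ltrDl.
have H : `|x| <= `|M| + 1 := HM (`|M| + 1) Mlt x Xx.
apply: (le_trans _ H). exact: coord_le_norm.
Qed.
Arguments mon {R d p}.
Arguments wt {R d p}.
Arguments RI {dT T R}.
Arguments int_cst {dT T R mu D}.
Arguments int_bnd_mul {dT T R mu D}.
Arguments int_sq_int {dT T R mu D}.
Arguments int_mul_sq {dT T R mu D}.
Arguments RI_lin {dT T R mu D}.
Arguments quad_pinv {R J}.
Arguments Qf {R J}.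
Arguments Gm {R J}.
Arguments kpoly_exp {R d p}.
Arguments bnd_coord {R d X}.
Arguments mcoord {R d D}.

Section main.
Variables (R : realType) (d p : nat) (X : set (Rd R d)) (P : probability (Rd R d) R).
Hypothesis mX : measurable X.
Variable K : R.
Hypothesis K1 : 1 <= K.
Hypothesis HK : forall x, X x -> forall i, `|(x : 'rV[R]_d) ord0 i| <= K.

Local Notation J := {ffun 'I_p -> option 'I_d}.

Lemma mmon (t : J) : measurable_fun X (fun x : Rd R d => mon t (x : 'rV[R]_d)).
Proof.
apply: measurable_prod => k _; case: (t k) => [i|].
  exact: mcoord.
exact: measurable_cst.
Qed.

Lemma bmon (t : J) x : X x -> `|mon t (x : 'rV[R]_d)| <= K ^+ p.
Proof. by move=> Xx; apply: mon_bnd => // i; exact: HK. Qed.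

Definition Gf (t s : J) : R := RI P X (fun x => mon t x * mon s x).

Lemma Gf_sym t s : Gf t s = Gf s t.
Proof. by rewrite /Gf /RI; congr fine; apply: eq_integral => x _; rewrite mulrC. Qed.

Lemma imm (t s : J) : P.-integrable X (EFin \o (fun x => mon t x * mon s x)).
Proof.
have h1 : P.-integrable X (EFin \o (@cst (Rd R d) R 1)) := int_cst mX 1.
have mm : measurable_fun X (fun x : Rd R d => mon t x * mon s x).
  by apply: measurable_realfun.measurable_funM; exact: mmon.
have bb : forall x, X x -> `|mon t x * mon s x| <= K ^+ p * K ^+ p.
  by move=> x Xx; rewrite normrM ler_pM // bmon.
have := int_bnd_mul mX _ _ (K ^+ p * K ^+ p) mm bb h1.
apply: (eq_integrable mX) => x _; by rewrite /= mulr1.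
Qed.

Definition GS (S : {set J}) (t s : J) : R := if (t \in S) && (s \in S) then Gf t s else 0.

Definition Cst : R := 1 + \sum_(S : {set J}) \sum_t \sum_s `|Qf (GS S) t s| * K ^+ p * K ^+ p.

Lemma Cst_gt0 : 0 < Cst.
Proof.
rewrite /Cst ltr_pwDl // sumr_ge0 // => S _; rewrite sumr_ge0 // => t _.
by rewrite sumr_ge0 // => s _; rewrite !mulr_ge0 // exprn_ge0 // (le_trans ler01 K1).
Qed.

Section decomp.
Variables (a : R) (I : finType) (nu : I -> R) (e : I -> Rd R d -> R).
Hypothesis a0 : 0 <= a.
Hypothesis nupos : forall r, 0 < nu r.
Hypothesis me : forall r, measurable_fun X (e r).
Hypothesis e2 : forall r, P.-integrable X (fun x => (e r x ^+ 2)%:E).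
Hypothesis orth : forall r s, (\int[P]_(x in X) (e r x * e s x)%:E)%E = ((r == s)%:R)%:E.
Hypothesis eig : forall r y, X y ->
  (\int[P]_(x in X) (kpoly p a x y * e r x)%:E)%E = (nu r * e r y)%:E.
Hypothesis dec : forall x y, X x -> X y -> kpoly p a x y = \sum_r nu r * e r x * e r y.

Lemma ie r : P.-integrable X (EFin \o e r).
Proof. exact: int_sq_int mX (e r) (me r) (e2 r). Qed.

Lemma ime (t : J) r : P.-integrable X (EFin \o (fun x => mon t x * e r x)).
Proof. exact: int_bnd_mul mX (fun x => mon t x) (e r) (K ^+ p) (mmon t) (bmon t) (ie r). Qed.

Definition mu_ r (t : J) : R := RI P X (fun x => mon t x * e r x).

Lemma hA r y : X y -> nu r * e r y = \sum_(t : J) (wt a t * mon t y) * mu_ r t.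
Proof.
move=> Xy; have := eig r y Xy.
rewrite (eq_integral (fun x : Rd R d => (\sum_(t : J) (wt a t * mon t y) * (mon t x * e r x))%:E)); last first.
  move=> x _; rewrite kpoly_exp mulr_suml; congr EFin; apply: eq_bigr => t _; ring.
rewrite (RI_lin mX _ (fun t => wt a t * mon t y) (fun t x => mon t x * e r x)); last by move=> t; exact: ime.
by move=> [<-].
Qed.

Lemma nu_neq0 r : nu r != 0.
Proof. by rewrite gt_eqF. Qed.

Lemma hA' r x : X x -> e r x = \sum_(t : J) (wt a t * mu_ r t / nu r) * mon t x.
Proof.
move=> Xx; apply: (mulfI (nu_neq0 r)); rewrite (hA r x Xx) mulr_sumr.
apply: eq_bigr => t _; field; exact: nu_neq0.
Qed.

Lemma hO r s : \sum_(t : J) wt a t * mu_ r t * mu_ s t = nu r * (r == s)%:R.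
Proof.
have := orth r s.
rewrite (eq_integral (fun x : Rd R d => (\sum_(t : J) (wt a t * mu_ r t / nu r) * (mon t x * e s x))%:E)); last first.
  move=> x; rewrite in_setE => Xx; rewrite (hA' r x Xx) mulr_suml; congr EFin.
  by apply: eq_bigr => t _; ring.
rewrite (RI_lin mX _ _ (fun t x => mon t x * e s x)); last by move=> t; exact: ime.
move=> [<-]; rewrite mulr_sumr; apply: eq_bigr => t _; rewrite /mu_; field; exact: nu_neq0.
Qed.

Lemma hG r (t : J) : mu_ r t = \sum_(s : J) Gf t s * (wt a s * mu_ r s / nu r).
Proof.
rewrite {1}/mu_ /RI.
rewrite (eq_integral (fun x : Rd R d => (\sum_(s : J) (wt a s * mu_ r s / nu r) * (mon t x * mon s x))%:E)); last first.
  move=> x; rewrite in_setE => Xx; rewrite (hA' r x Xx) mulr_sumr; congr EFin.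
  by apply: eq_bigr => s _; ring.
rewrite (RI_lin mX _ _ (fun s x => mon t x * mon s x)); last by move=> s; exact: imm.
by rewrite /=; apply: eq_bigr => s _; rewrite /Gf mulrC.
Qed.

Lemma hD y : X y -> \sum_(t : J) wt a t * mon t y ^+ 2 = \sum_r nu r * e r y ^+ 2.
Proof.
move=> Xy; have := dec y y Xy Xy; rewrite kpoly_exp => h.
transitivity (\sum_(t : J) wt a t * mon t y * mon t y).
  by apply: eq_bigr => t _; ring.
rewrite h; apply: eq_bigr => r _; ring.
Qed.

Lemma hz y : X y -> forall t : J, wt a t != 0 -> mon t y = \sum_r e r y * mu_ r t.
Proof.
move=> Xy.
have A1 : \sum_(t : J) wt a t * mon t y * (\sum_r e r y * mu_ r t) = \sum_r nu r * e r y ^+ 2.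
  under eq_bigr do rewrite mulr_sumr.
  rewrite exchange_big; apply: eq_bigr => r _.
  transitivity (e r y * \sum_(t : J) (wt a t * mon t y) * mu_ r t).
    by rewrite mulr_sumr; apply: eq_bigr => t _; ring.
  rewrite -(hA r y Xy); ring.
have A2 : \sum_(t : J) wt a t * (\sum_r e r y * mu_ r t) ^+ 2 = \sum_r nu r * e r y ^+ 2.
  transitivity (\sum_(t : J) \sum_r \sum_s (e r y * e s y) * (wt a t * mu_ r t * mu_ s t)).
    apply: eq_bigr => t _; rewrite expr2 mulr_suml mulr_sumr; apply: eq_bigr => r _.
    rewrite !mulr_sumr; apply: eq_bigr => s _; ring.
  rewrite exchange_big; apply: eq_bigr => r _.
  rewrite exchange_big.
  under eq_bigr do rewrite -mulr_sumr hO.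
  rewrite (bigD1 r) //= eqxx big1 ?addr0; first by rewrite mulr1; ring.
  by move=> s; rewrite eq_sym => /negbTE ->; rewrite mulr0 mulr0.
have Z0 : \sum_(t : J) wt a t * (mon t y - \sum_r e r y * mu_ r t) ^+ 2 = 0.
  transitivity (\sum_(t : J) wt a t * mon t y ^+ 2
     - 2 * (\sum_(t : J) wt a t * mon t y * (\sum_r e r y * mu_ r t))
     + \sum_(t : J) wt a t * (\sum_r e r y * mu_ r t) ^+ 2).
    rewrite mulr_sumr -sumrB -big_split /=; apply: eq_bigr => t _; ring.
  rewrite A1 A2 hD //; ring.
move=> t wt0.
have H := @psumr_eq0P _ _ _ (fun t : J => wt a t * (mon t y - \sum_r e r y * mu_ r t) ^+ 2)
  (fun t _ => mulr_ge0 (@wt_ge0 R d p a t a0) (sqr_ge0 _)) Z0 t isT.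
by move: H => /eqP; rewrite mulf_eq0 (negbTE wt0) /= sqrf_eq0 subr_eq0 => /eqP.
Qed.

Lemma bound_y y : X y -> \sum_r e r y ^+ 2 <= Cst.
Proof.
move=> Xy.
pose S : {set J} := [set t : J | wt a t != 0]%SET.
pose u (t : J) := if t \in S then mon t y else 0.
pose v (s : J) := wt a s * \sum_r (e r y * mu_ r s / nu r).
have wS : forall t, t \notin S -> wt a t = 0.
  by move=> t; rewrite /S inE negbK => /eqP.
have symS : forall t s, GS S t s = GS S s t.
  by move=> t s; rewrite /GS andbC Gf_sym.
have huv : forall t, u t = \sum_s GS S t s * v s.
  move=> t; rewrite /u /GS; case: ifP => tS; last first.
    by rewrite big1 // => s _; rewrite mul0r.
  rewrite (hz y Xy); last by move: tS; rewrite /S inE.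
  transitivity (\sum_s Gf t s * v s).
    under eq_bigr do rewrite hG mulr_sumr.
    rewrite exchange_big; apply: eq_bigr => s _.
    rewrite /v !mulr_sumr; apply: eq_bigr => r _; ring.
  apply: eq_bigr => s _; case: ifP => sS //=.
  have sS' : s \notin S by apply/negbT; move: sS => /= ->.
  by rewrite /v (wS s sS'); ring.
have Hq := quad_pinv (GS S) u v symS huv.
have Huv : \sum_t u t * v t = \sum_r e r y ^+ 2.
  transitivity (\sum_(t : J) wt a t * mon t y * \sum_r (e r y * mu_ r t / nu r)).
    apply: eq_bigr => t _; rewrite /u /v; case: ifP => tS; first by ring.
    have tS' : t \notin S by apply/negbT; move: tS => /= ->.
    by rewrite (wS t tS'); ring.
  under eq_bigr do rewrite mulr_sumr.
  rewrite exchange_big; apply: eq_bigr => r _.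
  transitivity (e r y / nu r * \sum_(t : J) (wt a t * mon t y) * mu_ r t).
    by rewrite mulr_sumr; apply: eq_bigr => t _; ring.
  rewrite -(hA r y Xy); field; exact: nu_neq0.
have K0 : 0 <= K ^+ p by rewrite exprn_ge0 // (le_trans ler01 K1).
have bu : forall t, `|u t| <= K ^+ p.
  by move=> t; rewrite /u; case: ifP => _; [exact: bmon | rewrite normr0].
rewrite -Huv Hq.
apply: (@le_trans _ _ (\sum_t \sum_s `|Qf (GS S) t s| * K ^+ p * K ^+ p)).
  apply: ler_sum => t _; apply: ler_sum => s _.
  rewrite (le_trans (ler_norm _)) // !normrM.
  rewrite (_ : `|Qf (GS S) t s| * K ^+ p * K ^+ p = K ^+ p * `|Qf (GS S) t s| * K ^+ p); last by ring.
  by apply: ler_pM => //; exact: ler_wpM2r.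
rewrite /Cst (bigD1 S) //= addrCA lerDl addr_ge0 // sumr_ge0 // => S' _.
rewrite sumr_ge0 // => t _; rewrite sumr_ge0 // => s _.
by rewrite !mulr_ge0.
Qed.

End decomp.
End main.


Theorem lemma3 (R : realType) (d p : nat) (X : set (Rd R d))
    (P : probability (Rd R d) R) :
  measurable X -> X !=set0 -> [bounded x | x in (X : set 'rV[R]_d)] ->
  P X = 1%E ->
  exists C : R, 0 < C /\
    forall (a gamma : R), 0 <= a -> 0 < gamma ->
    forall (I : finType) (nu : I -> R) (e : I -> Rd R d -> R),
      kernel_decomposition X P (kpoly p a) nu e ->
      (H_gamma X nu e gamma <= C%:E)%E.
Proof.
move=> mX _ bX _.
have [K [K1 HK]] := bnd_coord bX.
exists (@Cst R d p X P K); split; first exact: (@Cst_gt0 R d p X P K K1).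
move=> a gamma a0 g0 I nu e [nupos [me [e2 [orth [eig dec]]]]].
rewrite /H_gamma; apply: ge_ereal_sup => _ [y Xy <-]; rewrite lee_fin.
apply: le_trans (@bound_y R d p X P mX K K1 HK a I nu e a0 nupos me e2 orth eig dec y Xy).
apply: ler_sum => r _.
rewrite -[X in _ <= X]mul1r ler_wpM2r ?sqr_ge0 // /a_coef div1r invf_le1.
  by rewrite lerDl divr_ge0 // ltW.
have : 0 <= gamma / nu r by rewrite divr_ge0 // ltW.
lra.
Qed.
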